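(* Assume that $\mu \colon \mathcal{R}^2 \to \mathbb{R}^2$ is an $\mathrm{SL}(2)$-covariant valuation which splits over pyramids, with associated map $\bar\mu$. Then, for $a,b > 0$ and $x,y \in \mathbb{R}$, the function \[ f^I(x, y) := \mu \left[ I, -c \begin{pmatrix} x \\ 1 \end{pmatrix}, d \begin{pmatrix} y \\ 1 \end{pmatrix} \right] - \begin{pmatrix} 1 & 0 \\ x & 1 \end{pmatrix} \bar\mu [I, -c e_2] - \begin{pmatrix} 1 & 0 \\ y & 1 \end{pmatrix} \bar\mu [I, d e_2] \] is independent of $c,d > 0$ as long as $a, b, c, d, x, y$ form a double pyramid. Moreover, \[ f^I(x, y) = f^I(x, 0) + f^I(0, y) \] and \[ f^I(x, y) = \begin{pmatrix} 1 & 0 \\ y & 1 \end{pmatrix} f^I(x-y, 0) . \]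
   Context: Let $e_1,e_2$ be the standard basis of $\mathbb{R}^2$. For $a,b,c,d>0$ let $I=[-a e_1, b e_1]$ and $J=[-c e_2, d e_2]$; $[P_1,\dots,P_m]$ denotes the convex hull of $P_1\cup\dots\cup P_m$. For $x,y\in\mathbb{R}$, the numbers $a,b,c,d,x,y$ form a double pyramid if $\left[I, -c\begin{pmatrix} x\\1\end{pmatrix}, d\begin{pmatrix} y\\1\end{pmatrix}\right]\cap e_2^\perp = I$; $\mathcal{R}^2$ is the set of such double pyramids and $\mathcal{Q}^2\subseteq\mathcal{R}^2$ the set of straight ones ($x=y=0$). A valuation $\mu\colon \mathcal{Q}^2\to\mathbb{R}^2$ (or on $\mathcal{R}^2$) splits over pyramids if there is a map $\bar\mu$ such that $\mu[I,J]=\bar\mu[I,-c e_2]+\bar\mu[I,d e_2]$ for all $a,b,c,d>0$. $\mathrm{SL}(2)$-covariance means $\mu(\phi P)=\phi\,\mu(P)$ for all $\phi\in\mathrm{SL}(2)$ and $P$ in the domain for which $\phi P$ is also in the domain. *)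

(* Defs.v *)
From HB Require Import structures.
From mathcomp Require Import all_boot all_order all_algebra.
From mathcomp Require Import boolp classical_sets reals.
Set Implicit Arguments. Unset Strict Implicit. Unset Printing Implicit Defensive.
Import Order.TTheory GRing.Theory Num.Theory.
Local Open Scope ring_scope.
Local Open Scope classical_set_scope.

(* Points of R^2 are column vectors 'cV[R]_2; matrices act by left multiplication. *)
Section Defs.
Variable R : realType.

Definition pt (u v : R) : 'cV[R]_2 := \col_(i < 2) [:: u; v]`_i.
Definition e1 : 'cV[R]_2 := pt 1 0.
Definition e2 : 'cV[R]_2 := pt 0 1.

Definition conv (s : seq 'cV[R]_2) : set 'cV[R]_2 :=
  [set p | exists l : 'I_(size s) -> R,
     (forall i, 0 <= l i) /\ \sum_(i < size s) l i = 1 /\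
     p = \sum_(i < size s) l i *: s`_i].

Definition segI (a b : R) : set 'cV[R]_2 := conv [:: -a *: e1; b *: e1].

Definition straight_dp (a b c d : R) : set 'cV[R]_2 :=
  conv [:: -a *: e1; b *: e1; -c *: e2; d *: e2].

Definition pyr_lo (a b c : R) : set 'cV[R]_2 := conv [:: -a *: e1; b *: e1; -c *: e2].
Definition pyr_hi (a b d : R) : set 'cV[R]_2 := conv [:: -a *: e1; b *: e1; d *: e2].

Definition dpoly (a b c d x y : R) : set 'cV[R]_2 :=
  conv [:: -a *: e1; b *: e1; -c *: pt x 1; d *: pt y 1].

Definition e2perp : set 'cV[R]_2 := [set p | p ord_max ord0 = 0].

Definition is_dp (a b c d x y : R) : Prop :=
  [/\ 0 < a, 0 < b, 0 < c, 0 < d & dpoly a b c d x y `&` e2perp = segI a b].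

Definition DP : set (set 'cV[R]_2) :=
  [set P | exists a b c d x y, is_dp a b c d x y /\ P = dpoly a b c d x y].

Definition is_valuation_on (D : set (set 'cV[R]_2)) (mu : set 'cV[R]_2 -> 'cV[R]_2) :=
  forall P Q, D P -> D Q -> D (P `|` Q) -> D (P `&` Q) ->
    mu (P `|` Q) + mu (P `&` Q) = mu P + mu Q.

Definition image_mx (phi : 'M[R]_2) (P : set 'cV[R]_2) : set 'cV[R]_2 :=
  (fun p => phi *m p) @` P.

Definition SL2_covariant_on (D : set (set 'cV[R]_2)) (mu : set 'cV[R]_2 -> 'cV[R]_2) :=
  forall (phi : 'M[R]_2) P, \det phi = 1 -> D P -> D (image_mx phi P) ->
    mu (image_mx phi P) = phi *m mu P.

Definition splits_over_pyramids (mu mubar : set 'cV[R]_2 -> 'cV[R]_2) :=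
  forall a b c d, 0 < a -> 0 < b -> 0 < c -> 0 < d ->
    mu (straight_dp a b c d) = mubar (pyr_lo a b c) + mubar (pyr_hi a b d).

(* the shear fixing e1 and sending e2 to (x,1) (the paper's matrix (1 0; x 1)) *)
Definition shear (x : R) : 'M[R]_2 :=
  \matrix_(i < 2, j < 2)
    (if (i == ord0) && (j == ord_max) then x else (i == j)%:R).

Definition fI (mu mubar : set 'cV[R]_2 -> 'cV[R]_2) (a b c d x y : R) : 'cV[R]_2 :=
  mu (dpoly a b c d x y) - shear x *m mubar (pyr_lo a b c)
                        - shear y *m mubar (pyr_hi a b d).
End Defs.

(* Main.v *)
Require Import Defs.
From HB Require Import structures.
From mathcomp Require Import all_boot all_order all_algebra.
From mathcomp Require Import boolp classical_sets reals.
From mathcomp Require Import ring lra.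
Import Order.TTheory GRing.Theory Num.Theory.
Local Open Scope ring_scope.
Local Open Scope classical_set_scope.

Section S.
Variable R : realType.
Implicit Types (u v : R).

Lemma conv3P (P1 P2 P3 z : 'cV[R]_2) :
  conv [:: P1; P2; P3] z <-> exists l1 l2 l3 : R,
    [/\ 0 <= l1, 0 <= l2, 0 <= l3, l1 + l2 + l3 = 1 & z = l1 *: P1 + l2 *: P2 + l3 *: P3].
Proof.
split.
- case=> l [l0 [ls ->]]; exists (l ord0), (l (inord 1)), (l (inord 2)).
  move: ls; rewrite /= !big_ord_recl big_ord0 /=.
  have e1 : lift ord0 ord0 = inord 1 :> 'I_3 by apply: val_inj; rewrite /= inordK.
  have e2 : lift ord0 (lift ord0 ord0) = inord 2 :> 'I_3 by apply: val_inj; rewrite /= inordK.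
  rewrite e1 e2 addr0 => ls; split => //; first by rewrite -addrA.
  by rewrite big_ord0 addr0 !addrA.
- case=> l1 [l2 [l3 [h1 h2 h3 hs ->]]].
  exists (fun i : 'I_3 => [:: l1; l2; l3]`_i); split.
    by case=> [[|[|[|//]]]].
  rewrite /= !big_ord_recl big_ord0 /=; split; first by rewrite ?big_ord0 ?addr0 addrA.
  by rewrite ?big_ord0 ?addr0 !addrA.
Qed.

Lemma conv4P (P1 P2 P3 P4 z : 'cV[R]_2) :
  conv [:: P1; P2; P3; P4] z <-> exists l1 l2 l3 l4 : R,
    [/\ 0 <= l1, 0 <= l2, 0 <= l3, 0 <= l4 &
       l1 + l2 + l3 + l4 = 1 /\ z = l1 *: P1 + l2 *: P2 + l3 *: P3 + l4 *: P4].
Proof.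
split.
- case=> l [l0 [ls ->]]; exists (l ord0), (l (inord 1)), (l (inord 2)), (l (inord 3)).
  move: ls; rewrite /= !big_ord_recl big_ord0 /=.
  have e1 : lift ord0 ord0 = inord 1 :> 'I_4 by apply: val_inj; rewrite /= inordK.
  have e2 : lift ord0 (lift ord0 ord0) = inord 2 :> 'I_4 by apply: val_inj; rewrite /= inordK.
  have e3 : lift ord0 (lift ord0 (lift ord0 ord0)) = inord 3 :> 'I_4 by apply: val_inj; rewrite /= inordK.
  rewrite ?e1 ?e2 ?e3 ?addr0 => ls; split => //; split; first by rewrite ?addrA in ls.
  by rewrite ?big_ord0 ?addr0 ?addrA.
- case=> l1 [l2 [l3 [l4 [h1 h2 h3 h4 [hs ->]]]]].
  exists (fun i : 'I_4 => [:: l1; l2; l3; l4]`_i); split.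
    by case=> [[|[|[|[|//]]]]].
  rewrite /= !big_ord_recl big_ord0 /=; split; first by rewrite ?big_ord0 ?addr0 !addrA.
  by rewrite ?big_ord0 ?addr0 !addrA.
Qed.

Lemma conv2P (P1 P2 z : 'cV[R]_2) :
  conv [:: P1; P2] z <-> exists l1 l2 : R,
    [/\ 0 <= l1, 0 <= l2, l1 + l2 = 1 & z = l1 *: P1 + l2 *: P2].
Proof.
split.
- case=> l [l0 [ls ->]]; exists (l ord0), (l (inord 1)).
  move: ls; rewrite /= !big_ord_recl big_ord0 /=.
  have e1 : lift ord0 ord0 = inord 1 :> 'I_2 by apply: val_inj; rewrite /= inordK.
  rewrite ?e1 ?addr0 => ls; split => //; rewrite ?big_ord0 ?addr0 //.
- case=> l1 [l2 [h1 h2 hs ->]].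
  exists (fun i : 'I_2 => [:: l1; l2]`_i); split.
    by case=> [[|[|//]]].
  rewrite /= !big_ord_recl big_ord0 /=; split; first by rewrite ?big_ord0 ?addr0.
  by rewrite ?big_ord0 ?addr0.
Qed.

Lemma ptX u v : (pt u v) ord0 ord0 = u. Proof. by rewrite mxE. Qed.
Lemma ptY u v : (pt u v) ord_max ord0 = v. Proof. by rewrite mxE. Qed.

Lemma vec2_eq (z w : 'cV[R]_2) : z ord0 ord0 = w ord0 ord0 -> z ord_max ord0 = w ord_max ord0 -> z = w.
Proof.
move=> h0 h1; apply/matrixP => i j; rewrite (ord1 j).
case: i => [[|[|//]]] Hi.
- by rewrite (_ : Ordinal Hi = ord0) //; apply: val_inj.
- by rewrite (_ : Ordinal Hi = ord_max) //; apply: val_inj.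
Qed.

Lemma pt_eta (z : 'cV[R]_2) : z = pt (z ord0 ord0) (z ord_max ord0).
Proof. by apply: vec2_eq; rewrite ?ptX ?ptY. Qed.

Lemma scale_pt k u v : k *: pt u v = pt (k * u) (k * v).
Proof. by apply: vec2_eq; rewrite !mxE. Qed.
Lemma add_pt u v u' v' : pt u v + pt u' v' = pt (u + u') (v + v').
Proof. by apply: vec2_eq; rewrite !mxE. Qed.
Lemma pt_inj u v u' v' : pt u v = pt u' v' -> u = u' /\ v = v'.
Proof. by move=> e; split; [rewrite -(ptX u v) e ptX | rewrite -(ptY u v) e ptY]. Qed.

Lemma shear_pt s u v : shear s *m pt u v = pt (u + s * v) v.
Proof. apply: vec2_eq; rewrite !mxE !big_ord_recl big_ord0 !mxE /=; ring. Qed.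

Lemma det_shear (s : R) : \det (shear s) = 1.
Proof.
rewrite (expand_det_row _ ord0) !big_ord_recl big_ord0 /cofactor.
rewrite !det_mx11 !mxE /=; ring.
Qed.

Lemma shearM (s t : R) : shear s *m shear t = shear (s + t).
Proof.
apply/matrixP => i j; rewrite !mxE !big_ord_recl big_ord0 !mxE.
case: i => [[|[|//]]] Hi; case: j => [[|[|//]]] Hj /=; ring.
Qed.

Lemma shear0 : shear 0 = 1 :> 'M[R]_2.
Proof.
apply/matrixP => i j; rewrite !mxE.
case: i => [[|[|//]]] Hi; case: j => [[|[|//]]] Hj //=.
Qed.

Lemma conv3_pt u1 v1 u2 v2 u3 v3 z :
  conv [:: pt u1 v1; pt u2 v2; pt u3 v3] z <-> exists l1 l2 l3 : R,
    [/\ 0 <= l1, 0 <= l2, 0 <= l3, l1 + l2 + l3 = 1 &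
      z ord0 ord0 = l1 * u1 + l2 * u2 + l3 * u3 /\ z ord_max ord0 = l1 * v1 + l2 * v2 + l3 * v3].
Proof.
rewrite conv3P; split; case=> l1 [l2 [l3 [h1 h2 h3 hs he]]]; exists l1, l2, l3; split => //.
- by rewrite he !scale_pt !add_pt !ptX !ptY.
- case: he => hx hy; rewrite (pt_eta z) !scale_pt !add_pt hx hy //.
Qed.

Lemma conv4_pt u1 v1 u2 v2 u3 v3 u4 v4 z :
  conv [:: pt u1 v1; pt u2 v2; pt u3 v3; pt u4 v4] z <-> exists l1 l2 l3 l4 : R,
    [/\ 0 <= l1, 0 <= l2, 0 <= l3, 0 <= l4 &
     l1 + l2 + l3 + l4 = 1 /\
      z ord0 ord0 = l1 * u1 + l2 * u2 + l3 * u3 + l4 * u4 /\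
      z ord_max ord0 = l1 * v1 + l2 * v2 + l3 * v3 + l4 * v4].
Proof.
rewrite conv4P; split; case=> l1 [l2 [l3 [l4 [h1 h2 h3 h4 [hs he]]]]]; exists l1, l2, l3, l4; split => //; split => //.
- by rewrite he !scale_pt !add_pt !ptX !ptY.
- case: he => hx hy; rewrite (pt_eta z) !scale_pt !add_pt hx hy //.
Qed.

Lemma conv2_pt u1 v1 u2 v2 z :
  conv [:: pt u1 v1; pt u2 v2] z <-> exists l1 l2 : R,
    [/\ 0 <= l1, 0 <= l2, l1 + l2 = 1 &
      z ord0 ord0 = l1 * u1 + l2 * u2 /\ z ord_max ord0 = l1 * v1 + l2 * v2].
Proof.
rewrite conv2P; split; case=> l1 [l2 [h1 h2 hs he]]; exists l1, l2; split => //.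
- by rewrite he !scale_pt !add_pt !ptX !ptY.
- case: he => hx hy; rewrite (pt_eta z) !scale_pt !add_pt hx hy //.
Qed.


Lemma half (a b u v u' v' l1 l2 l3 l4 zx zy : R) : 0 < a -> 0 < b ->
  v * v' < 0 -> -a <= (v' * u - v * u') / (v' - v) <= b ->
  0 <= l1 -> 0 <= l2 -> 0 <= l3 -> 0 <= l4 -> l1 + l2 + l3 + l4 = 1 ->
  zx = l1 * - a + l2 * b + l3 * u + l4 * u' ->
  zy = l1 * 0 + l2 * 0 + l3 * v + l4 * v' ->
  0 <= zy / v ->
  exists k1 k2 k3 : R, [/\ 0 <= k1, 0 <= k2, 0 <= k3, k1 + k2 + k3 = 1 &
     zx = k1 * - a + k2 * b + k3 * u /\ zy = k1 * 0 + k2 * 0 + k3 * v].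
Proof.
move=> ha hb hvv /andP[hm1 hm2] h1 h2 h3 h4 hs hx hy hk3.
have hv : v != 0 by apply/eqP => e; move: hvv; rewrite e mul0r ltxx.
have hvv' : v' - v != 0.
  apply/eqP => e; have : v' = v by apply/eqP; rewrite -subr_eq0 e.
  by move=> e'; move: hvv; rewrite e' -expr2 ltNge sqr_ge0.
have hab : a + b != 0 by rewrite lt0r_neq0 // addr_gt0.
set m := (v' * u - v * u') / (v' - v) in hm1 hm2.
set t := (m + a) / (a + b).
set k := l4 * ((v' - v) / - v).
have hq : 0 <= (v' - v) / - v.
  have -> : (v' - v) / - v = 1 - (v * v') / (v * v).
    by field.
  have : (v * v') / (v * v) <= 0.
    by apply: mulr_le0_ge0; [apply: ltW | rewrite invr_ge0 -expr2 sqr_ge0].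
  lra.
have hk : 0 <= k by apply: mulr_ge0.
have ht0 : 0 <= t by apply: divr_ge0; lra.
have ht1 : t <= 1 by rewrite ler_pdivrMr ?addr_gt0 //; lra.
exists (l1 + k * (1 - t)), (l2 + k * t), (zy / v); split.
- by apply: addr_ge0 => //; apply: mulr_ge0 => //; lra.
- by apply: addr_ge0 => //; apply: mulr_ge0.
- done.
- have -> : l1 = 1 - l2 - l3 - l4 by lra.
  rewrite /k /t hy; field.
  by rewrite hv hab.
- split; last by field.
  rewrite hx hy /k /t /m; field.
  by rewrite hv hab hvv'.
Qed.

Section Geo.
Variables (a b : R).
Hypotheses (ha : 0 < a) (hb : 0 < b).

Definition Tri u v := conv [:: pt (-a) 0; pt b 0; pt u v].
Definition Q4 u v u' v' := conv [:: pt (-a) 0; pt b 0; pt u v; pt u' v'].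
Definition Seg := conv [:: pt (-a) 0; pt b (0:R)].
Definition crossc u v u' v' := -a <= (v' * u - v * u') / (v' - v) <= b.

Lemma crossc_sym u v u' v' : v * v' < 0 -> crossc u v u' v' -> crossc u' v' u v.
Proof.
move=> hvv; rewrite /crossc.
have hvv' : v' - v != 0.
  apply/eqP => e; have e' : v' = v by apply/eqP; rewrite -subr_eq0 e.
  by move: hvv; rewrite e' -expr2 ltNge sqr_ge0.
have hvv2 : v - v' != 0 by rewrite -opprB oppr_eq0.
have -> : (v * u' - v' * u) / (v - v') = (v' * u - v * u') / (v' - v) by field; rewrite hvv' hvv2.
done.
Qed.

Lemma decomp u v u' v' : v < 0 -> 0 < v' -> crossc u v u' v' ->
  Q4 u v u' v' = Tri u v `|` Tri u' v'.
Proof.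
move=> hv hv' hc; apply/seteqP; split => z /=.
- move=> /conv4_pt [l1 [l2 [l3 [l4 [h1 h2 h3 h4 [hs [hx hy]]]]]]].
  have hvv : v * v' < 0 by rewrite pmulr_llt0.
  case: (lerP (z ord_max ord0) 0) => hz.
  + left; apply/conv3_pt.
    apply: (@half a b u v u' v' l1 l2 l3 l4) => //.
    rewrite -mulrNN -invrN; apply: divr_ge0; lra.
  + right; apply/conv3_pt.
    have hvv2 : v' * v < 0 by rewrite mulrC.
    apply: (@half a b u' v' u v l1 l2 l4 l3) => //.
    * by apply: crossc_sym.
    * lra.
    * by rewrite hx; ring.
    * by rewrite hy; ring.
    * apply: divr_ge0; lra.
- case=> /conv3_pt [l1 [l2 [l3 [h1 h2 h3 hs [hx hy]]]]]; apply/conv4_pt.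
  + exists l1, l2, l3, 0; split => //; split; first lra.
    by rewrite hx hy; split; ring.
  + exists l1, l2, 0, l3; split => //; split; first lra.
    by rewrite hx hy; split; ring.
Qed.

Lemma tri_axis u v : v != 0 -> Tri u v `&` @e2perp R = Seg.
Proof.
move=> hv; apply/seteqP; split => z /=.
- case=> /conv3_pt [l1 [l2 [l3 [h1 h2 h3 hs [hx hy]]]]]; rewrite /e2perp /= => hz.
  have hl3 : l3 = 0.
    apply/eqP; have : l3 * v == 0 by apply/eqP; rewrite -hz hy; ring.
    by rewrite mulf_eq0 (negbTE hv) orbF.
  apply/conv2_pt; exists l1, l2; split => //; first lra.
  by rewrite hx hy hl3; split; ring.
- move=> /conv2_pt [l1 [l2 [h1 h2 hs [hx hy]]]]; split.
  + apply/conv3_pt; exists l1, l2, 0; split => //; first lra.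
    by rewrite hx hy; split; ring.
  + by rewrite /e2perp /= hy; ring.
Qed.

Lemma seg_tri u v : v != 0 -> Seg `<=` Tri u v.
Proof. by move=> hv z; rewrite -(@tri_axis u v hv); case. Qed.

Lemma tri_sign u v z : Tri u v z -> exists l, 0 <= l /\ z ord_max ord0 = l * v.
Proof.
move=> /conv3_pt [l1 [l2 [l3 [h1 h2 h3 hs [hx hy]]]]]; exists l3; split => //.
by rewrite hy; ring.
Qed.

Lemma tri_mem u v X Y : v != 0 -> 0 <= Y / v <= 1 ->
  -a * (1 - Y / v) <= X - (Y / v) * u <= b * (1 - Y / v) -> Tri u v (pt X Y).
Proof.
move=> hv /andP[t0 t1] /andP[m1 m2].
have hab : 0 < a + b by apply: addr_gt0.
set t := Y / v in t0 t1 m1 m2.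
set l2 := (X - t * u + a * (1 - t)) / (a + b).
apply/conv3_pt; exists (1 - t - l2), l2, t; rewrite ptX ptY; split => //.
- rewrite subr_ge0 /l2 ler_pdivrMr //.
  nra.
- rewrite /l2; apply: divr_ge0; [nra | exact: ltW].
- ring.
- split; rewrite /l2 /t; field; by rewrite hv /= lt0r_neq0.
Qed.

Lemma tri_sub u v u' v' : Tri u' v' (pt u v) -> Tri u v `<=` Tri u' v'.
Proof.
move=> /conv3_pt [m1 [m2 [m3 [g1 g2 g3 gs [gx gy]]]]].
move=> z /conv3_pt [l1 [l2 [l3 [h1 h2 h3 hs [hx hy]]]]].
rewrite ptX in gx; rewrite ptY in gy.
apply/conv3_pt; exists (l1 + l3 * m1), (l2 + l3 * m2), (l3 * m3); split.
- by apply: addr_ge0 => //; apply: mulr_ge0.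
- by apply: addr_ge0 => //; apply: mulr_ge0.
- by apply: mulr_ge0.
- have -> : l1 = 1 - l2 - l3 by lra.
  have -> : m1 = 1 - m2 - m3 by lra.
  ring.
- by rewrite hx hy gx gy; split; ring.
Qed.

Lemma cross_of u v u' v' : v < 0 -> 0 < v' ->
  Q4 u v u' v' `&` @e2perp R = Seg -> crossc u v u' v'.
Proof.
move=> hv hv' e.
have hvv' : 0 < v' - v by lra.
set m := (v' * u - v * u') / (v' - v).
have : Seg (pt m 0).
  rewrite -e; split; last by rewrite /e2perp /= ptY.
  apply/conv4_pt; exists 0, 0, (v' / (v' - v)), (- v / (v' - v)); rewrite ptX ptY; split => //.
  - apply: divr_ge0; lra.
  - apply: divr_ge0; lra.
  - split; first by field; rewrite lt0r_neq0.
    split; rewrite /m; field; by rewrite lt0r_neq0.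
move=> /conv2_pt [l1 [l2 [h1 h2 hs [hx hy]]]]; rewrite ptX in hx.
have e1 : l1 = 1 - l2 by lra.
have g1 := mulr_ge0 h2 (ltW ha); have g2 := mulr_ge0 h2 (ltW hb); have g3 := mulr_ge0 h1 (ltW ha); have g4 := mulr_ge0 h1 (ltW hb).
rewrite /crossc -/m hx e1; apply/andP; split; nra.
Qed.

End Geo.

Section Geo2.
Variables (a b : R).
Hypotheses (ha : 0 < a) (hb : 0 < b).

Lemma dpoly_Q4 c d x y : dpoly a b c d x y = Q4 a b (-c*x) (-c) (d*y) d.
Proof. by rewrite /dpoly /Q4 /e1 !scale_pt !mulr1 !mulr0. Qed.
Lemma segI_Seg : segI a b = Seg a b.
Proof. by rewrite /segI /Seg /e1 !scale_pt !mulr1 !mulr0. Qed.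
Lemma pyr_lo_Tri c : pyr_lo a b c = Tri a b 0 (-c).
Proof. by rewrite /pyr_lo /Tri /e1 /e2 !scale_pt !mulr1 !mulr0. Qed.
Lemma pyr_hi_Tri d : pyr_hi a b d = Tri a b 0 d.
Proof. by rewrite /pyr_hi /Tri /e1 /e2 !scale_pt !mulr1 !mulr0. Qed.

Lemma crossvalE c d x y : 0 < c -> 0 < d ->
  crossc a b (-c*x) (-c) (d*y) d <-> -a <= c * d * (y - x) / (c + d) <= b.
Proof.
move=> hc hd; rewrite /crossc.
have -> : (d * (- c * x) - - c * (d * y)) / (d - - c) = c * d * (y - x) / (c + d).
  by field; rewrite addrC lt0r_neq0 // addr_gt0.
done.
Qed.

Lemma is_dpE c d x y : is_dp a b c d x y <->
  [/\ 0 < c, 0 < d & -a <= c * d * (y - x) / (c + d) <= b].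
Proof.
split.
- case=> _ _ hc hd e; split => //; apply/crossvalE => //.
  apply: cross_of => //; first by rewrite oppr_lt0.
  by rewrite -dpoly_Q4 -segI_Seg.
- case=> hc hd /(@crossvalE c d x y hc hd) hcr; split => //.
  rewrite dpoly_Q4 segI_Seg decomp //; last by rewrite oppr_lt0.
  rewrite setIUl !tri_axis ?setUid //; first by rewrite lt0r_neq0.
  by rewrite oppr_eq0 lt0r_neq0.
Qed.

Lemma dp_decomp c d x y : is_dp a b c d x y ->
  dpoly a b c d x y = Tri a b (-c*x) (-c) `|` Tri a b (d*y) d.
Proof.
move=> /is_dpE [hc hd hcr]; rewrite dpoly_Q4 decomp //; first by rewrite oppr_lt0.
by apply/crossvalE.
Qed.

Lemma DP_of c d x y : is_dp a b c d x y -> DP (dpoly a b c d x y).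
Proof. by move=> h; exists a, b, c, d, x, y. Qed.

Lemma image_shear s c d x y :
  image_mx (shear s) (dpoly a b c d x y) = dpoly a b c d (x + s) (y + s).
Proof.
rewrite !dpoly_Q4; apply/seteqP; split.
- move=> z [w hw <-]; move: hw => /conv4_pt [l1 [l2 [l3 [l4 [h1 h2 h3 h4 [hs [hx hy]]]]]]].
  apply/conv4_pt; exists l1, l2, l3, l4; split => //; split => //.
  by rewrite (pt_eta w) shear_pt ptX ptY hx hy; split; ring.
- move=> z /conv4_pt [l1 [l2 [l3 [l4 [h1 h2 h3 h4 [hs [hx hy]]]]]]].
  exists (pt (z ord0 ord0 - s * z ord_max ord0) (z ord_max ord0)).
  + apply/conv4_pt; exists l1, l2, l3, l4; split => //; split => //.
    by rewrite ptX ptY hx hy; split; ring.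
  + by rewrite shear_pt; apply: vec2_eq; rewrite ?ptX ?ptY //; ring.
Qed.

Lemma is_dp_shift s c d x y : is_dp a b c d x y -> is_dp a b c d (x + s) (y + s).
Proof.
move=> /is_dpE [hc hd hcr]; apply/is_dpE; split => //.
by rewrite (_ : y + s - (x + s) = y - x) //; ring.
Qed.

Lemma tri_lo_small c x e : 0 < c -> 0 < e -> e * 2 <= c ->
  e * `|x| * 2 <= a -> e * `|x| * 2 <= b -> Tri a b 0 (-e) `<=` Tri a b (-c*x) (-c).
Proof.
move=> hc he h1 h2 h3.
have ht : - e / - c = e / c by rewrite invrN mulrNN.
have hec : e / c <= 1 / 2 by rewrite ler_pdivrMr //; lra.
have hec0 : 0 <= e / c by apply: divr_ge0; lra.
have e2 : 0 - e / c * (- c * x) = e * x by field; rewrite lt0r_neq0.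
have hx : `|e * x| <= e * `|x| by rewrite normrM gtr0_norm.
move: hx; rewrite ler_norml => /andP [hx1 hx2].
apply: tri_sub; apply: (@tri_mem a b ha hb).
- by rewrite oppr_eq0 lt0r_neq0.
- apply/andP; split; lra.
- apply/andP; split; nra.
Qed.

Lemma tri_hi_small d y e : 0 < d -> 0 < e -> e * 2 <= d ->
  e * `|y| * 2 <= a -> e * `|y| * 2 <= b -> Tri a b 0 e `<=` Tri a b (d*y) d.
Proof.
move=> hd he h1 h2 h3.
have hec : e / d <= 1 / 2 by rewrite ler_pdivrMr //; lra.
have hec0 : 0 <= e / d by apply: divr_ge0; lra.
have e2 : 0 - e / d * (d * y) = - (e * y) by field; rewrite lt0r_neq0.
have hx : `|e * y| <= e * `|y| by rewrite normrM gtr0_norm.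
move: hx; rewrite ler_norml => /andP [hx1 hx2].
apply: tri_sub; apply: (@tri_mem a b ha hb); rewrite ?e2.
- by rewrite lt0r_neq0.
- apply/andP; split; lra.
- apply/andP; split; nra.
Qed.

Lemma tri_hi_nest d1 d2 : 0 < d2 -> d2 <= d1 -> Tri a b (d2 * 0) d2 `<=` Tri a b (d1 * 0) d1.
Proof.
move=> h2 h12.
have h1 : 0 < d1 by lra.
have hq : d2 / d1 <= 1 by rewrite ler_pdivrMr // mul1r.
have hq0 : 0 <= d2 / d1 by apply: divr_ge0; lra.
have g1 : 0 <= a * (1 - d2 / d1) by apply: mulr_ge0; [exact: ltW | rewrite subr_ge0].
have g2 : 0 <= b * (1 - d2 / d1) by apply: mulr_ge0; [exact: ltW | rewrite subr_ge0].
rewrite !mulr0; apply: tri_sub; apply: (@tri_mem a b ha hb).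
- by rewrite lt0r_neq0.
- by apply/andP; split.
- rewrite mulr0 subr0; apply/andP; split; lra.
Qed.

Lemma tri_lo_nest c1 c2 : 0 < c2 -> c2 <= c1 -> Tri a b (- c2 * 0) (- c2) `<=` Tri a b (- c1 * 0) (- c1).
Proof.
move=> h2 h12.
have h1 : 0 < c1 by lra.
have ht : - c2 / - c1 = c2 / c1 by rewrite invrN mulrNN.
have hq : c2 / c1 <= 1 by rewrite ler_pdivrMr // mul1r.
have hq0 : 0 <= c2 / c1 by apply: divr_ge0; lra.
have g1 : 0 <= a * (1 - c2 / c1) by apply: mulr_ge0; [exact: ltW | rewrite subr_ge0].
have g2 : 0 <= b * (1 - c2 / c1) by apply: mulr_ge0; [exact: ltW | rewrite subr_ge0].
rewrite !mulr0; apply: tri_sub; apply: (@tri_mem a b ha hb); rewrite ?ht.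
- by rewrite oppr_eq0 lt0r_neq0.
- by apply/andP; split.
- rewrite mulr0 subr0; apply/andP; split; lra.
Qed.

End Geo2.

Lemma scale_between (a b X t : R) : 0 < a -> 0 < b -> 0 <= t <= 1 ->
  -a <= X <= b -> -a <= X * t <= b.
Proof.
move=> ha hb /andP[t0 t1] /andP[x1 x2].
have g1 : 0 <= t * (X + a) by apply: mulr_ge0; lra.
have g2 : 0 <= (1 - t) * a by apply: mulr_ge0; lra.
have g3 : 0 <= t * (b - X) by apply: mulr_ge0; lra.
have g4 : 0 <= (1 - t) * b by apply: mulr_ge0; lra.
apply/andP; split; nra.
Qed.

Section Geo3.
Variables (a b : R).
Hypotheses (ha : 0 < a) (hb : 0 < b).

Lemma dp_straight c d : 0 < c -> 0 < d -> is_dp a b c d 0 0.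
Proof.
move=> hc hd; apply/(@is_dpE a b ha hb _ _ _ _); split => //.
rewrite subr0 mulr0 mul0r oppr_le0 !ltW //.
Qed.

Lemma dp_mono_d c d d0 x y : is_dp a b c d x y -> 0 < d0 -> d0 <= d -> is_dp a b c d0 x y.
Proof.
move=> /(@is_dpE a b ha hb _ _ _ _) [hc hd hv] h0 h0d; apply/(@is_dpE a b ha hb _ _ _ _); split => //.
have -> : c * d0 * (y - x) / (c + d0) =
   (c * d * (y - x) / (c + d)) * ((d0 * (c + d)) / (d * (c + d0))).
  by field; rewrite !lt0r_neq0 ?addr_gt0.
apply: scale_between => //; apply/andP; split.
- by apply: divr_ge0; apply: mulr_ge0; lra.
- rewrite ler_pdivrMr ?mulr_gt0 ?addr_gt0 // mul1r; nra.
Qed.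

Lemma dp_mono_c c d c0 x y : is_dp a b c d x y -> 0 < c0 -> c0 <= c -> is_dp a b c0 d x y.
Proof.
move=> /(@is_dpE a b ha hb _ _ _ _) [hc hd hv] h0 h0c; apply/(@is_dpE a b ha hb _ _ _ _); split => //.
have -> : c0 * d * (y - x) / (c0 + d) =
   (c * d * (y - x) / (c + d)) * ((c0 * (c + d)) / (c * (c0 + d))).
  by field; rewrite !lt0r_neq0 ?addr_gt0.
apply: scale_between => //; apply/andP; split.
- by apply: divr_ge0; apply: mulr_ge0; lra.
- rewrite ler_pdivrMr ?mulr_gt0 ?addr_gt0 // mul1r; nra.
Qed.

Lemma dp_small_c c d x y : 0 < c -> 0 < d -> c * `|y - x| <= a -> c * `|y - x| <= b ->
  is_dp a b c d x y.
Proof.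
move=> hc hd h1 h2; apply/(@is_dpE a b ha hb _ _ _ _); split => //.
have -> : c * d * (y - x) / (c + d) = (c * (y - x)) * (d / (c + d)).
  by field; rewrite !lt0r_neq0 ?addr_gt0.
apply: scale_between => //.
- apply/andP; split; first by apply: divr_ge0; lra.
  by rewrite ler_pdivrMr ?addr_gt0 // mul1r; lra.
- have : `|c * (y - x)| <= c * `|y - x| by rewrite normrM gtr0_norm.
  rewrite ler_norml => /andP[g1 g2]; apply/andP; split; lra.
Qed.

Lemma dp_small_d c d x y : 0 < c -> 0 < d -> d * `|y - x| <= a -> d * `|y - x| <= b ->
  is_dp a b c d x y.
Proof.
move=> hc hd h1 h2; apply/(@is_dpE a b ha hb _ _ _ _); split => //.
have -> : c * d * (y - x) / (c + d) = (d * (y - x)) * (c / (c + d)).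
  by field; rewrite !lt0r_neq0 ?addr_gt0.
apply: scale_between => //.
- apply/andP; split; first by apply: divr_ge0; lra.
  by rewrite ler_pdivrMr ?addr_gt0 // mul1r; lra.
- have : `|d * (y - x)| <= d * `|y - x| by rewrite normrM gtr0_norm.
  rewrite ler_norml => /andP[g1 g2]; apply/andP; split; lra.
Qed.

Lemma small_exists (p1 p2 p3 : R) : 0 < p1 -> 0 < p2 -> 0 < p3 ->
  exists e, [/\ 0 < e, e <= p1, e <= p2 & e <= p3].
Proof.
move=> h1 h2 h3; exists (Num.min p1 (Num.min p2 p3)); split.
- by rewrite !lt_min h1 h2 h3.
- by rewrite ge_min lexx.
- by rewrite ge_min ge_min lexx orbT.
- by rewrite ge_min ge_min lexx !orbT.
Qed.

End Geo3.

Lemma cD (u v : 'cV[R]_2) i : (u + v) i ord0 = u i ord0 + v i ord0. Proof. by rewrite mxE. Qed.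
Lemma cN (u : 'cV[R]_2) i : (- u) i ord0 = - u i ord0. Proof. by rewrite mxE. Qed.

Lemma shear0' : shear 0 = 1%:M :> 'M[R]_2.
Proof. by rewrite shear0. Qed.

Lemma small_for (a b c z w : R) : 0 < a -> 0 < b -> 0 < c -> exists e, [/\ 0 < e, e * 2 <= c,
  e * `|z| * 2 <= a /\ e * `|z| * 2 <= b & e * `|w| * 2 <= a /\ e * `|w| * 2 <= b].
Proof.
move=> ha hb hc.
set K := `|z| + `|w| + 1.
have hz := normr_ge0 z; have hw := normr_ge0 w.
have hK : 0 < K by rewrite /K; lra.
have [e [he e1 e2 e3]] := @small_exists (c / 2) (a / (2 * K)) (b / (2 * K))
   ltac:(apply: divr_gt0; lra) ltac:(apply: divr_gt0 => //; lra) ltac:(apply: divr_gt0 => //; lra).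
move: e1 e2 e3; rewrite !ler_pdivlMr ?mulr_gt0 // => e1 e2 e3.
have g1 := mulr_ge0 (ltW he) hz; have g2 := mulr_ge0 (ltW he) hw.
exists e; split => //; rewrite /K in e2 e3; try split; nra.
Qed.

Section Val.
Variables (mu mubar : set 'cV[R]_2 -> 'cV[R]_2).
Hypotheses (hval : is_valuation_on (@DP R) mu) (hcov : SL2_covariant_on (@DP R) mu)
  (hsplit : splits_over_pyramids mu mubar).
Variables (a b : R).
Hypotheses (ha : 0 < a) (hb : 0 < b).

Lemma strM c d : 0 < c -> 0 < d ->
  mu (dpoly a b c d 0 0) = mubar (pyr_lo a b c) + mubar (pyr_hi a b d).
Proof. move=> hc hd; exact: (hsplit a b c d ha hb hc hd). Qed.

Lemma covM s c d x y : is_dp a b c d x y ->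
  mu (dpoly a b c d (x + s) (y + s)) = shear s *m mu (dpoly a b c d x y).
Proof.
move=> h; rewrite -image_shear; apply: hcov; first exact: det_shear.
- exact: DP_of.
- by rewrite image_shear; apply: DP_of; apply: is_dp_shift.
Qed.

Lemma cross_rel c1 x1 c2 x2 d1 y1 d2 y2 :
  is_dp a b c1 d1 x1 y1 -> is_dp a b c2 d1 x2 y1 -> is_dp a b c1 d2 x1 y2 -> is_dp a b c2 d2 x2 y2 ->
  Tri a b (-c1*x1) (-c1) `<=` Tri a b (-c2*x2) (-c2) ->
  Tri a b (d2*y2) d2 `<=` Tri a b (d1*y1) d1 ->
  mu (dpoly a b c2 d1 x2 y1) + mu (dpoly a b c1 d2 x1 y2) =
  mu (dpoly a b c1 d1 x1 y1) + mu (dpoly a b c2 d2 x2 y2).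
Proof.
move=> h11 h21 h12 h22 sL sU.
have [hc1 hd1 _] := (@is_dpE a b ha hb _ _ _ _).1 h11.
have [hc2 hd2 _] := (@is_dpE a b ha hb _ _ _ _).1 h22.
have eU : dpoly a b c1 d1 x1 y1 `|` dpoly a b c2 d2 x2 y2 = dpoly a b c2 d1 x2 y1.
  rewrite !dp_decomp //; apply/seteqP; split => z /=.
  - by case=> [[h|h]|[h|h]]; [left; apply: sL | right | left | right; apply: sU].
  - by case=> h; [right; left | left; right].
have eI : dpoly a b c1 d1 x1 y1 `&` dpoly a b c2 d2 x2 y2 = dpoly a b c1 d2 x1 y2.
  rewrite !dp_decomp //; apply/seteqP; split => z /=.
  - case=> [[h|h] [h'|h']]; [by left | by left | | by right].
    left; apply: (@seg_tri a b); first by rewrite oppr_eq0 lt0r_neq0.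
    rewrite -(@tri_axis a b (d1 * y1) d1); last by rewrite lt0r_neq0.
    split => //; rewrite /e2perp /=.
    have [l [l0 hl]] := @tri_sign a b _ _ _ h; have [l' [l0' hl']] := @tri_sign a b _ _ _ h'.
    apply/eqP; rewrite eq_le; apply/andP; split.
    + rewrite hl'; rewrite mulrN oppr_le0; apply: mulr_ge0 => //; exact: ltW.
    + rewrite hl; apply: mulr_ge0 => //; exact: ltW.
  - case=> h; split; [by left | by left; apply: sL | by right; apply: sU | by right].
rewrite -eU -eI; apply: hval; rewrite ?eU ?eI; exact: DP_of.
Qed.


Ltac vsolve E :=
  apply: vec2_eq; rewrite ?cD ?cN;
  [have := congr1 (fun m : 'cV[R]_2 => m ord0 ord0) E |
   have := congr1 (fun m : 'cV[R]_2 => m ord_max ord0) E];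
  rewrite /= ?cD ?cN; lra.

Lemma dstep c d1 d2 z : is_dp a b c d1 z 0 -> is_dp a b c d2 z 0 -> d2 <= d1 ->
  fI mu mubar a b c d1 z 0 = fI mu mubar a b c d2 z 0.
Proof.
move=> h1 h2 hd.
have [hc hd1 _] := (@is_dpE a b ha hb _ _ _ _).1 h1.
have [_ hd2 _] := (@is_dpE a b ha hb _ _ _ _).1 h2.
have [e [he e1 [e2 e3] _]] := @small_for a b c z z ha hb hc.
have E := @cross_rel e 0 c z d1 0 d2 0 (@dp_straight a b ha hb e d1 he hd1) h1
   (@dp_straight a b ha hb e d2 he hd2) h2
   ltac:(by rewrite mulr0; apply: tri_lo_small)
   ltac:(by apply: tri_hi_nest).
rewrite !strM // in E.
rewrite /fI shear0' !mul1mx.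
vsolve E.
Qed.

Lemma cswap c1 c2 d z : is_dp a b c1 d z 0 -> is_dp a b c2 d z 0 -> c2 <= c1 ->
  fI mu mubar a b c1 d z 0 = fI mu mubar a b c2 d z 0.
Proof.
move=> h1 h2 hc.
have h1' : is_dp a b c1 d 0 (-z) by have := @is_dp_shift a b ha hb (-z) _ _ _ _ h1; rewrite addrN add0r.
have h2' : is_dp a b c2 d 0 (-z) by have := @is_dp_shift a b ha hb (-z) _ _ _ _ h2; rewrite addrN add0r.
have [hc1 hd _] := (@is_dpE a b ha hb _ _ _ _).1 h1.
have [hc2 _ _] := (@is_dpE a b ha hb _ _ _ _).1 h2.
have [e [he e1 [e2 e3] _]] := @small_for a b d (-z) (-z) ha hb hd.
have E := @cross_rel c2 0 c1 0 d (-z) e 0 h2' h1'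
   (@dp_straight a b ha hb c2 e hc2 he) (@dp_straight a b ha hb c1 e hc1 he)
   ltac:(by apply: tri_lo_nest)
   ltac:(by rewrite mulr0; apply: tri_hi_small).
rewrite !strM // in E.
have C1 := @covM z _ _ _ _ h1'; have C2 := @covM z _ _ _ _ h2'.
rewrite add0r addNr in C1 C2.
rewrite /fI C1 C2 shear0' !mul1mx -!mulmxBr.
have -> : mu (dpoly a b c1 d 0 (- z)) - mubar (pyr_lo a b c1) =
          mu (dpoly a b c2 d 0 (- z)) - mubar (pyr_lo a b c2) by vsolve E.
done.
Qed.

Lemma indep0 c d c' d' z : is_dp a b c d z 0 -> is_dp a b c' d' z 0 ->
  fI mu mubar a b c d z 0 = fI mu mubar a b c' d' z 0.
Proof.
move=> h h'.
have [hc hd _] := (@is_dpE a b ha hb _ _ _ _).1 h.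
have [hc' hd' _] := (@is_dpE a b ha hb _ _ _ _).1 h'.
set d0 := Num.min d d'.
have hd0 : 0 < d0 by rewrite lt_min hd hd'.
have hd0d : d0 <= d by rewrite ge_min lexx.
have hd0d' : d0 <= d' by rewrite ge_min lexx orbT.
have k := @dp_mono_d a b ha hb _ _ _ _ _ h hd0 hd0d.
have k' := @dp_mono_d a b ha hb _ _ _ _ _ h' hd0 hd0d'.
rewrite (@dstep _ _ _ _ h k hd0d) (@dstep _ _ _ _ h' k' hd0d').
case: (lerP c' c) => hcc.
- exact: cswap.
- by apply/esym/cswap => //; apply: ltW.
Qed.

Lemma shiftfI c d x y : is_dp a b c d x y ->
  is_dp a b c d (x - y) 0 /\ fI mu mubar a b c d x y = shear y *m fI mu mubar a b c d (x - y) 0.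
Proof.
move=> h.
have h' : is_dp a b c d (x - y) 0 by have := @is_dp_shift a b ha hb (-y) _ _ _ _ h; rewrite addrN.
split => //.
have C := @covM y _ _ _ _ h'; rewrite subrK add0r in C.
rewrite /fI C !mulmxBr mulmxA shearM shear0' mul1mx (_ : y + (x - y) = x) //.
by rewrite addrC subrK.
Qed.

Lemma indep c d c' d' x y : is_dp a b c d x y -> is_dp a b c' d' x y ->
  fI mu mubar a b c d x y = fI mu mubar a b c' d' x y.
Proof.
move=> h h'; have [k ->] := @shiftfI _ _ _ _ h; have [k' ->] := @shiftfI _ _ _ _ h'.
by rewrite (@indep0 _ _ _ _ _ k k').
Qed.

Lemma additive x y c d c1 d1 c2 d2 :
  is_dp a b c d x y -> is_dp a b c1 d1 x 0 -> is_dp a b c2 d2 0 y ->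
  fI mu mubar a b c d x y = fI mu mubar a b c1 d1 x 0 + fI mu mubar a b c2 d2 0 y.
Proof.
move=> h h1 h2.
have [hc hd _] := (@is_dpE a b ha hb _ _ _ _).1 h.
have [e [he e1 [ex1 ex2] [ey1 ey2]]] := @small_for a b c x y ha hb hc.
have [f [hf f1 [fx1 fx2] [fy1 fy2]]] := @small_for a b d x y ha hb hd.
have gx := normr_ge0 x; have gy := normr_ge0 y.
have ge1 := mulr_ge0 (ltW he) gy; have gf1 := mulr_ge0 (ltW hf) gx.
have k1 : is_dp a b e d 0 y by apply: (@dp_small_c a b ha hb) => //; rewrite subr0; lra.
have k2 : is_dp a b c f x 0 by apply: (@dp_small_d a b ha hb) => //; rewrite sub0r normrN; lra.
have E := @cross_rel e 0 c x d y f 0 k1 h (@dp_straight a b ha hb e f he hf) k2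
   ltac:(by rewrite mulr0; apply: tri_lo_small)
   ltac:(by rewrite mulr0; apply: tri_hi_small).
rewrite strM // in E.
rewrite -(@indep _ _ _ _ _ _ k2 h1) -(@indep _ _ _ _ _ _ k1 h2).
rewrite /fI shear0' !mul1mx.
vsolve E.
Qed.

End Val.
End S.

Local Close Scope classical_set_scope.

Theorem lemma3p4 (R : realType) (mu mubar : set 'cV[R]_2 -> 'cV[R]_2) :
  is_valuation_on (@DP R) mu ->
  SL2_covariant_on (@DP R) mu ->
  splits_over_pyramids mu mubar ->
  forall a b : R, 0 < a -> 0 < b ->
  [/\ (forall c d c' d' x y, is_dp a b c d x y -> is_dp a b c' d' x y ->
         fI mu mubar a b c d x y = fI mu mubar a b c' d' x y),
      (forall x y c d c1 d1 c2 d2,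
         is_dp a b c d x y -> is_dp a b c1 d1 x 0 -> is_dp a b c2 d2 0 y ->
         fI mu mubar a b c d x y = fI mu mubar a b c1 d1 x 0 + fI mu mubar a b c2 d2 0 y) &
      (forall x y c d c1 d1,
         is_dp a b c d x y -> is_dp a b c1 d1 (x - y) 0 ->
         fI mu mubar a b c d x y = shear y *m fI mu mubar a b c1 d1 (x - y) 0)].
Proof.
move=> hval hcov hsplit a b ha hb; split.
- move=> c d c' d' x y h h'; exact: (@indep R mu mubar hval hcov hsplit a b ha hb _ _ _ _ _ _ h h').
- move=> x y c d c1 d1 c2 d2 h h1 h2;
  exact: (@additive R mu mubar hval hcov hsplit a b ha hb _ _ _ _ _ _ _ _ h h1 h2).
- move=> x y c d c1 d1 h h1.
  have [k ->] := @shiftfI R mu mubar hcov a b ha hb _ _ _ _ h.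
  by rewrite (@indep0 R mu mubar hval hcov hsplit a b ha hb _ _ _ _ _ k h1).
Qed.
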